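(* Let $f=\sum a_nq^n\in S_k(\Gamma_1(N_f),\epsilon_f)$ and $g=\sum b_nq^n\in S_k(\Gamma_1(N_g),\epsilon_g)$ be normalized cuspidal Hecke eigenforms of the same weight $k$, with $p\nmid N_fN_g$, whose coefficients and character values lie in $\mathcal{O}$. If $f$ and $g$ are $p^r$-congruent, i.e. $a_m\equiv b_m\bmod p^r\mathcal{O}$ for all integers $m$ coprime to $N_fN_g$, then $\epsilon_f(p)\equiv\epsilon_g(p)\bmod p^r\mathcal{O}$.
   Context: $p$ is an odd prime with a fixed embedding $\overline{\mathbb{Q}}\hookrightarrow\mathbb{C}_p$; $E/\mathbb{Q}_p$ is a finite extension containing all Fourier coefficients of $f,g$ and values of $\epsilon_f,\epsilon_g$, and $\mathcal{O}$ is its ring of integers; $r$ is a positive integer. *)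

(* Defs.v *)
From HB Require Import structures.
From mathcomp Require Import all_boot all_order all_algebra all_field.
From mathcomp Require Import all_classical all_reals.
From mathcomp Require Import all_analysis.
From mathcomp Require Import complex.
Set Implicit Arguments. Unset Strict Implicit. Unset Printing Implicit Defensive.
Import Order.TTheory GRing.Theory Num.Theory.
Local Open Scope ring_scope.

(* p-adic side.  A fixed embedding  Qbar -> C_p  is encoded by the induced   *)
(* absolute value on Qbar = algC: a non-archimedean absolute value with      *)
(* |p| = 1/p (such absolute values correspond exactly to embeddings of Qbar  *)
(* into C_p, up to the action of Gal(C_p/Q_p), which does not change |.|).   *)
Definition padic_abs (p : nat) (v : algC -> algC) : Prop :=
  [/\ forall x, 0 <= v x,
      forall x, v x = 0 <-> x = 0,
      forall x y, v (x * y) = v x * v y,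
      forall x y, v (x + y) <= v x \/ v (x + y) <= v y
    & v (p%:R) = (p%:R)^-1 ].

(* x lies in the valuation ring O (integral at the fixed prime above p). *)
Definition p_integral (v : algC -> algC) (x : algC) : Prop := v x <= 1.

(* For x, y in O:  x = y mod p^r O  iff  |x - y|_p <= |p^r|_p. *)
Definition congr_pr (v : algC -> algC) (p r : nat) (x y : algC) : Prop :=
  v (x - y) <= v ((p%:R) ^+ r).

Definition dirichlet_char (N : nat) (eps : int -> algC) : Prop :=
  [/\ eps 1 = 1,
      forall m n : int, eps (m * n) = eps m * eps n,
      forall n : int, eps (n + N%:Z) = eps n
    & forall n : int, (eps n != 0) = coprimez n N%:Z ].

Section ComplexSide.
Variable R : realType.
Local Notation C := R[i].
Local Open Scope complex_scope.

Definition cabs (z : C) : R := ComplexField.Normc.normc z.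

Definition upper (z : C) : Prop := 0 < complex.Im z.

Definition cexp (z : C) : C :=
  ((expR (complex.Re z))%:C * (cos (complex.Im z) +i* sin (complex.Im z)))%R.

Definition qpow (n : nat) (z : C) : C := cexp ((2 * pi)%:C * 'i * n%:R * z)%R.

Definition holomorphic_H (f : C -> C) : Prop :=
  forall z, upper z -> exists L : C,
    forall e : R, 0 < e -> exists d : R, 0 < d /\
      forall w, upper w -> cabs (w - z) < d ->
        cabs (f w - f z - L * (w - z)) <= e * cabs (w - z).

Definition mob (a b c d : int) (z : C) : C :=
  ((a%:~R * z + b%:~R) / (c%:~R * z + d%:~R))%R.

Definition slash (k : nat) (a b c d : int) (f : C -> C) (z : C) : C :=
  (((c%:~R * z + d%:~R) ^- k) * f (mob a b c d z))%R.

(* f in S_k(Gamma_1(N), eps), where the character is viewed in C via iota *)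
Definition cusp_form (iota : {rmorphism algC -> C}) (k N : nat)
    (eps : int -> algC) (f : C -> C) : Prop :=
  [/\ holomorphic_H f,
      (* modularity for Gamma_0(N) with nebentypus eps *)
      forall a b c d : int, a * d - b * c = 1 -> (N%:Z %| c)%Z ->
        forall z, upper z ->
          f (mob a b c d z) = (iota (eps d) * (c%:~R * z + d%:~R) ^+ k * f z)%R
    & (* vanishing at every cusp *)
      forall a b c d : int, a * d - b * c = 1 ->
        forall e : R, 0 < e -> exists M : R, forall z, upper z -> M < complex.Im z ->
          cabs (slash k a b c d f z) < e ].

Definition q_expansion (f : C -> C) (an : nat -> C) : Prop :=
  forall z, upper z -> forall e : R, 0 < e -> exists M : nat, forall n, (M <= n)%N ->
    cabs (f z - \sum_(0 <= m < n) an m * qpow m z)%R < e.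

(* Hecke operator T_n on q-expansions for S_k(Gamma_1(N), eps):
   a_m(T_n f) = sum_{d | (m,n)} eps(d) d^{k-1} a_{mn/d^2}. *)
Definition hecke_coef (iota : {rmorphism algC -> C}) (k : nat)
    (eps : int -> algC) (an : nat -> C) (n m : nat) : C :=
  (\sum_(d <- divisors (gcdn m n))
      iota (eps d%:Z) * (d%:R) ^+ (k.-1) * an ((m * n) %/ (d * d))%N)%R.

Definition normalized_eigenform (iota : {rmorphism algC -> C}) (k : nat)
    (eps : int -> algC) (an : nat -> C) : Prop :=
  an 1%N = 1 /\
  exists lam : nat -> C, forall n m, (0 < n)%N -> (0 < m)%N ->
    hecke_coef iota k eps an n m = (lam n * an m)%R.

End ComplexSide.

(* Main.v *)
Require Import Defs.
From HB Require Import structures.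
From mathcomp Require Import all_boot all_order all_algebra all_field.
From mathcomp Require Import all_classical all_reals.
From mathcomp Require Import all_analysis.
From mathcomp Require Import complex.
From mathcomp Require Import ring.
Set Implicit Arguments. Unset Strict Implicit.
Import Order.TTheory GRing.Theory Num.Theory.
Local Open Scope ring_scope.

Lemma v1 p v : padic_abs p v -> v 1 = 1.
Proof.
case=> h0 h00 hM _ _.
have hn : v 1 != 0 by apply/eqP => /h00 /eqP; rewrite oner_eq0.
by apply: (mulfI hn); rewrite -hM !mulr1.
Qed.

Lemma vN p v x : padic_abs p v -> v (- x) = v x.
Proof.
move=> hv; have h1 := v1 hv; case: hv => h0 h00 hM _ _.
have hm1 : v (-1) = 1.
  apply/eqP; rewrite -sqrp_eq1 // expr2 -hM mulrNN mulr1 h1 //.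
by rewrite -mulN1r hM hm1 mul1r.
Qed.

Lemma vadd p v c x y : padic_abs p v -> v x <= c -> v y <= c -> v (x + y) <= c.
Proof. case=> _ _ _ hU _ hx hy; case: (hU x y) => h; exact: le_trans h _. Qed.

Lemma vsub p v c x y : padic_abs p v -> v x <= c -> v y <= c -> v (x - y) <= c.
Proof. move=> hv hx hy; apply: (vadd hv) => //; by rewrite (vN _ hv). Qed.

Lemma vnat p v n : padic_abs p v -> v n%:R <= 1.
Proof.
move=> hv; elim: n => [|n IH].
  have : v 0 = 0 by case: hv => _ h00 _ _ _; apply/h00.
  by move=> ->; rewrite ler01.
by rewrite -addn1 natrD; apply: (vadd hv) => //; rewrite (v1 hv).
Qed.

Lemma vexp p v x n : padic_abs p v -> v (x ^+ n) = v x ^+ n.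
Proof.
move=> hv; elim: n => [|n IH]; first by rewrite !expr0 (v1 hv).
by rewrite !exprS; case: hv => _ _ hM _ _; rewrite hM IH.
Qed.

Lemma vunit p v q : padic_abs p v -> prime p -> coprime q p -> v q%:R = 1.
Proof.
move=> hv pp cq.
have hp0 : (0 < p)%N by exact: prime_gt0.
have [a _ /dvdnP [w hw]] := Bezoutl q hp0.
rewrite gcdnC (eqP cq) in hw.
have hvq : v q%:R <= 1 := vnat _ hv.
apply/eqP; rewrite eq_le hvq /=.
have hx : (w * p)%:R + - (a * q)%:R = 1 :> algC.
  by rewrite -hw natrD addrK.
have hpinv : v p%:R = (p%:R)^-1 by case: hv.
have h0 : forall x, 0 <= v x by case: hv.
have hM : forall x y, v (x * y) = v x * v y by case: hv.
have hU : forall x y, v (x + y) <= v x \/ v (x + y) <= v y by case: hv.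
have hp1 : (p%:R : algC)^-1 < 1.
  by rewrite invf_lt1 ?ltr0n // ltr1n prime_gt1.
case: (hU ((w * p)%:R) (- (a * q)%:R)); rewrite hx (v1 hv).
  rewrite natrM hM hpinv => h.
  have h2 : v w%:R * (p%:R)^-1 <= (p%:R : algC)^-1.
    by apply: ler_piMl (vnat _ hv); rewrite invr_ge0 ler0n.
  by have := le_lt_trans (le_trans h h2) hp1; rewrite ltxx.
rewrite (vN _ hv) natrM hM => h; apply: le_trans h _.
by apply: ler_piMl (vnat _ hv).
Qed.

Lemma congr_mul p v r x1 y1 x2 y2 : padic_abs p v ->
  v x1 <= 1 -> v y2 <= 1 ->
  congr_pr v p r x1 y1 -> congr_pr v p r x2 y2 ->
  congr_pr v p r (x1 * x2) (y1 * y2).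
Proof.
move=> hv hx1 hy2 c1 c2; rewrite /congr_pr.
have -> : x1 * x2 - y1 * y2 = x1 * (x2 - y2) + (x1 - y1) * y2 by ring.
have h0 : forall x, 0 <= v x by case: hv.
have hM : forall x y, v (x * y) = v x * v y by case: hv.
apply: (vadd hv); rewrite hM.
  by apply: le_trans c2; apply: ler_piMl.
by apply: le_trans c1; apply: ler_piMr.
Qed.

Lemma divisors_prime q : prime q -> divisors q = [:: 1%N; q].
Proof.
move=> qp; apply: (irr_sorted_eq ltn_trans ltnn (sorted_divisors_ltn q)).
  by case/primeP: qp => q1 _; rewrite /= q1.
move=> d; rewrite -dvdn_divisors ?prime_gt0 // !inE.
case/primeP: qp => _ H; apply/idP/idP => [/H // | /orP [/eqP-> | /eqP->]].
  exact: dvd1n.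
exact: dvdnn.
Qed.

Lemma eig_rel (R : realType) (iota : {rmorphism algC -> R[i]}) k eps (a : nat -> algC) :
  eps 1 = 1 -> normalized_eigenform iota k eps (fun n => iota (a n)) ->
  a 1%N = 1 /\ forall q, prime q -> a q * a q = a (q*q)%N + eps q%:Z * q%:R ^+ k.-1.
Proof.
move=> e1 [h1 [lam hl]].
have e1' : eps 1%:Z = 1 := e1.
have a1 : a 1%N = 1 by apply: (fmorph_inj iota); rewrite h1 rmorph1.
split => // q qp.
have q0 := prime_gt0 qp.
have hq1 := hl q 1%N q0 isT.
rewrite /hecke_coef gcd1n in hq1.
have hd1 : divisors 1 = [:: 1%N] by [].
rewrite hd1 big_cons big_nil addr0 mul1n divn1 e1' rmorph1 expr1n !mul1r h1 mulr1 in hq1.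
have hqq := hl q q q0 q0.
rewrite /hecke_coef gcdnn (divisors_prime qp) big_cons big_cons big_nil addr0 in hqq.
rewrite muln1 divn1 divnn muln_gt0 q0 e1' rmorph1 expr1n !mul1r h1 mulr1 -hq1 in hqq.
apply: (fmorph_inj iota); rewrite rmorphD !rmorphM rmorphXn rmorph_nat -hqq.
done.
Qed.

Lemma eps_per N eps n j : dirichlet_char N eps -> eps (n + (N * j)%N%:Z) = eps n.
Proof.
case=> _ _ hP _; elim: j => [|j IH]; first by rewrite muln0 addr0.
by rewrite mulnS PoszD addrCA addrC hP IH.
Qed.

Unset Implicit Arguments.

Theorem lemma4p3
  (p r k Nf Ng : nat) (v : algC -> algC)
  (R : realType) (iota : {rmorphism algC -> R[i]})
  (epsf epsg : int -> algC) (f g : R[i] -> R[i]) (a b : nat -> algC) :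
  prime p -> odd p -> (0 < r)%N ->
  padic_abs p v ->
  (0 < Nf)%N -> (0 < Ng)%N -> ~~ (p %| Nf * Ng)%N ->
  dirichlet_char Nf epsf -> dirichlet_char Ng epsg ->
  cusp_form iota k Nf epsf f -> cusp_form iota k Ng epsg g ->
  q_expansion f (fun n => iota (a n)) -> q_expansion g (fun n => iota (b n)) ->
  normalized_eigenform iota k epsf (fun n => iota (a n)) ->
  normalized_eigenform iota k epsg (fun n => iota (b n)) ->
  (forall n, p_integral v (a n)) -> (forall n, p_integral v (b n)) ->
  (forall n, p_integral v (epsf n)) -> (forall n, p_integral v (epsg n)) ->
  (forall m : nat, (0 < m)%N -> coprime m (Nf * Ng) -> congr_pr v p r (a m) (b m)) ->
  congr_pr v p r (epsf p%:Z) (epsg p%:Z).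
Proof.
move=> pp _ _ hv _ _ pN chf chg _ _ _ _ eigf eigg ia ib ief ieg hab.
have h0 : forall x, 0 <= v x by case: hv.
have hM : forall x y, v (x * y) = v x * v y by case: hv.
have [ef1 efM _ _] := chf.
have [eg1 egM _ _] := chg.
have [_ haf] := eig_rel ef1 eigf.
have [_ hbg] := eig_rel eg1 eigg.
set N := (Nf * Ng)%N in hab pN *.
have stepA : forall q, prime q -> coprime q N -> coprime q p ->
    congr_pr v p r (epsf q%:Z) (epsg q%:Z).
  move=> q qp qN qpc.
  have key : (epsf q%:Z - epsg q%:Z) * q%:R ^+ k.-1
      = (a q * a q - b q * b q) - (a (q * q)%N - b (q * q)%N).
    rewrite (haf q qp) (hbg q qp); ring.
  have vq : v (q%:R ^+ k.-1) = 1 by rewrite (vexp _ _ hv) (vunit hv pp qpc) expr1n.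
  rewrite /congr_pr.
  have -> : v (epsf q%:Z - epsg q%:Z) = v ((epsf q%:Z - epsg q%:Z) * q%:R ^+ k.-1)
    by rewrite hM vq mulr1.
  rewrite key.
  apply: (vsub hv).
    have hq := hab q (prime_gt0 qp) qN; exact: (congr_mul hv (ia q) (ib q) hq hq).
  apply: hab; first by rewrite muln_gt0 prime_gt0.
  by rewrite coprimeMl qN.
have stepB : forall l, (0 < l)%N -> coprime l N -> coprime l p ->
    congr_pr v p r (epsf l%:Z) (epsg l%:Z).
  elim/ltn_ind => l IH l0 lN lp.
  have [->|ln1] := eqVneq l 1%N.
    by rewrite /congr_pr ef1 eg1 subrr; have [_ h00 _ _ _] := hv;
      rewrite (proj2 (h00 0) erefl).
  have l1 : (1 < l)%N by rewrite ltn_neqAle eq_sym ln1 l0.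
  have qp := pdiv_prime l1.
  set q := pdiv l in qp.
  set m := (l %/ q)%N.
  have hl : l = (m * q)%N by rewrite divnK // pdiv_dvd.
  have ml : (m < l)%N by apply: ltn_Pdiv; [exact: prime_gt1 | exact: l0].
  rewrite hl coprimeMl in lN; case/andP: lN => mN qN.
  rewrite hl coprimeMl in lp; case/andP: lp => mp qpc.
  have m0 : (0 < m)%N by move: l0; rewrite hl muln_gt0 => /andP [].
  rewrite hl PoszM efM egM.
  apply: (congr_mul hv); [exact: ief | exact: ieg | exact: IH | exact: stepA].
have e1 : epsf p%:Z = epsf (p + N)%N%:Z by rewrite PoszD eps_per.
have e2 : epsg p%:Z = epsg (p + N)%N%:Z by rewrite /N mulnC PoszD eps_per.
rewrite e1 e2; apply: stepB; first by rewrite addn_gt0 prime_gt0.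
  by rewrite /coprime gcdnC gcdnDr gcdnC -/(coprime p N) prime_coprime.
by rewrite /coprime gcdnC gcdnDl -/(coprime p N) prime_coprime.
Qed.
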